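(* Let $G$ be a graph such that the free category $\mathcal{F}_1(G)$ is a totally ordered set (regarded as a category). Then $\mathcal{F}_1(G)$ is isomorphic to one of the following: - a finite ordinal $\mathsf{0},\mathsf{1},\dots,\mathsf{n},\dots$; - one of the totally ordered sets $\mathbb{N}$, $\mathbb{N}^{\mathrm{op}}$ and $\mathbb{Z}$ with their usual orders.
   Context: A graph is a directed multigraph, consisting of objects, arrows, and domain and codomain maps. $\mathcal{F}_1(G)$ is the free category on $G$. Its objects are the vertices of $G$, its morphisms are the finite composable paths of arrows, and identities are the empty paths. A poset is regarded as a category with a unique morphism $x\to y$ exactly when $x\le y$. The finite ordinal $\mathsf{n}$ is the totally ordered set $0<1<\dots<n-1$; in particular $\mathsf{0}$ is empty. *)

(* Defs.v *)
From Stdlib Require Import Arith ZArith.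

Record graph : Type := Graph {
  vert : Type;
  arr : Type;
  dom : arr -> vert;
  cod : arr -> vert
}.

(* Morphisms of the free category F_1(G) from x to y: finite composable paths of arrows.
   The identity is the empty path. *)
Inductive path (G : graph) : vert G -> vert G -> Type :=
| pnil : forall x : vert G, path G x x
| pcons : forall (e : arr G) (y : vert G), path G (cod G e) y -> path G (dom G e) y.

Fixpoint pcomp (G : graph) (x y z : vert G) (p : path G x y) : path G y z -> path G x z :=
  match p in path _ x0 y0 return path G y0 z -> path G x0 z with
  | pnil _ _ => fun q => q
  | pcons _ e y' p' => fun q => pcons G e z (pcomp G _ _ _ p' q)
  end.

(* F_1(G) is a poset regarded as a category: it is thin (at most one morphism
   between any two objects) and skeletal (morphisms both ways force equality). *)
Definition free_cat_is_poset (G : graph) : Prop :=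
  (forall (x y : vert G) (p q : path G x y), p = q) /\
  (forall x y : vert G, path G x y -> path G y x -> x = y).

Definition free_cat_is_total_order (G : graph) : Prop :=
  free_cat_is_poset G /\
  (forall x y : vert G, inhabited (path G x y) \/ inhabited (path G y x)).

(* Isomorphism of the thin category F_1(G) with a poset (T, le) regarded as a
   category: a bijection on objects, with hom-sets corresponding (both thin, so a
   bijection of hom-sets amounts to: one is inhabited iff the other is). *)
Definition free_cat_iso_poset (G : graph) (T : Type) (le : T -> T -> Prop) : Prop :=
  exists (f : vert G -> T) (g : T -> vert G),
    (forall x, g (f x) = x) /\ (forall t, f (g t) = t) /\
    (forall x y : vert G, inhabited (path G x y) <-> le (f x) (f y)).

Definition ordinal (n : nat) : Type := {k : nat | k < n}.
Definition ordinal_le (n : nat) (a b : ordinal n) : Prop := proj1_sig a <= proj1_sig b.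

(* Main.v *)
Require Import Defs.
From Stdlib Require Import Arith ZArith Lia Classical ClassicalEpsilon ProofIrrelevance.

Fixpoint plen (G : graph) (x y : vert G) (p : path G x y) : nat :=
  match p with pnil _ _ => 0 | pcons _ _ _ p' => S (plen G _ _ p') end.

Lemma plen_comp G x y z (p : path G x y) (q : path G y z) :
  plen G _ _ (pcomp G x y z p q) = plen G _ _ p + plen G _ _ q.
Proof. induction p; simpl; auto. Qed.

Lemma len0 G x y (p : path G x y) : plen G _ _ p = 0 -> x = y.
Proof. destruct p; simpl; auto; discriminate. Qed.

Definition Drel G x0 v k :=
  (exists p : path G x0 v, k = Z.of_nat (plen G _ _ p)) \/
  (exists p : path G v x0, k = (- Z.of_nat (plen G _ _ p))%Z).

Definition thinG G := forall (x y : vert G) (p q : path G x y), p = q.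
Definition totG G := forall x y : vert G, inhabited (path G x y) \/ inhabited (path G y x).

Lemma loop0 G (th : thinG G) x (p : path G x x) : plen G _ _ p = 0.
Proof. rewrite (th x x p (pnil G x)). reflexivity. Qed.

Lemma D_unique G (th : thinG G) x0 v k k' : Drel G x0 v k -> Drel G x0 v k' -> k = k'.
Proof.
  intros [[p ->]|[p ->]] [[q ->]|[q ->]].
  - rewrite (th _ _ p q); auto.
  - pose proof (loop0 G th _ (pcomp G _ _ _ p q)) as H; rewrite plen_comp in H; lia.
  - pose proof (loop0 G th _ (pcomp G _ _ _ q p)) as H; rewrite plen_comp in H; lia.
  - rewrite (th _ _ p q); auto.
Qed.

Lemma D_exists G (tt : totG G) x0 v : exists k, Drel G x0 v k.
Proof.
  destruct (tt x0 v) as [[p]|[p]].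
  - eexists; left; exists p; reflexivity.
  - eexists; right; exists p; reflexivity.
Qed.

Lemma D_add G (th : thinG G) (tt : totG G) x0 u v a (p : path G u v) :
  Drel G x0 u a -> Drel G x0 v (a + Z.of_nat (plen G _ _ p)).
Proof.
  intros [[q ->]|[q ->]].
  - left; exists (pcomp G _ _ _ q p); rewrite plen_comp; lia.
  - destruct (tt x0 v) as [[r]|[r]].
    + left; exists r. pose proof (f_equal (plen G _ _) (th _ _ (pcomp G _ _ _ q r) p)) as H.
      rewrite plen_comp in H; lia.
    + right; exists r. pose proof (f_equal (plen G _ _) (th _ _ (pcomp G _ _ _ p r) q)) as H.
      rewrite plen_comp in H; lia.
Qed.

Lemma conv_path G (d : vert G -> Z)
  (dA : forall u v (p : path G u v), d v = (d u + Z.of_nat (plen G _ _ p))%Z) :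
  forall x y (p : path G x y) k, (d x <= k <= d y)%Z -> exists w, d w = k.
Proof.
  intros x y p; induction p as [x|e y p IH]; intros k Hk.
  - exists x; lia.
  - pose proof (dA _ _ (pcons G e _ (pnil G (cod G e)))) as H1; simpl in H1.
    destruct (Z.eq_dec k (d (dom G e))) as [->|Hne].
    + exists (dom G e); auto.
    + apply IH; lia.
Qed.

Lemma transfer G (T:Type) (le: T->T->Prop) (d : vert G -> Z) (S : Z -> Prop)
  (phi : Z -> T) (psi : T -> Z) :
 (forall u v, d u = d v -> u = v) ->
 (forall u v, inhabited (path G u v) <-> (d u <= d v)%Z) ->
 (forall k, S k -> exists w, d w = k) ->
 (forall v, S (d v)) ->
 (forall t, S (psi t)) -> (forall t, phi (psi t) = t) -> (forall k, S k -> psi (phi k) = k) ->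
 (forall a b, S a -> S b -> (le (phi a) (phi b) <-> (a <= b)%Z)) ->
 free_cat_iso_poset G T le.
Proof.
  intros dinj dle Sim Sd Spsi H1 H2 Hle.
  set (g := fun t => proj1_sig (constructive_indefinite_description _ (Sim _ (Spsi t)))).
  assert (Hg : forall t, d (g t) = psi t) by (intro t; exact (proj2_sig (constructive_indefinite_description _ (Sim _ (Spsi t))))).
  exists (fun v => phi (d v)), g. split; [|split].
  - intro x. apply dinj. rewrite Hg. apply H2, Sd.
  - intro t. rewrite Hg. apply H1.
  - intros x y. rewrite dle. rewrite Hle by apply Sd. tauto.
Qed.

Lemma bound (P : nat -> Prop) : (forall n m, m <= n -> P n -> P m) ->
  forall n, ~ P n -> exists b, forall k, P k <-> k < b.
Proof.
  intros Hd n. induction n as [|n IH]; intro Hn.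
  - exists 0. intro k; split; [intro Hk; exfalso; apply Hn, (Hd k); [lia|auto] | lia].
  - destruct (classic (P n)) as [Hp|Hp]; [|auto].
    exists (S n). intro k; split.
    + intro Hk. destruct (Nat.lt_ge_cases k (S n)); auto. exfalso; apply Hn, (Hd k); auto.
    + intro; apply (Hd n); [lia|auto].
Qed.

Lemma ord_eq N (a b : ordinal N) : proj1_sig a = proj1_sig b -> a = b.
Proof. destruct a, b; simpl; intros ->; f_equal; apply proof_irrelevance. Qed.

Lemma core G (th : thinG G) (tt : totG G) (x0 : vert G) :
  (exists n : nat, free_cat_iso_poset G (ordinal n) (ordinal_le n)) \/
  free_cat_iso_poset G nat le \/
  free_cat_iso_poset G nat (fun a b => b <= a) \/
  free_cat_iso_poset G Z Z.le.
Proof.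
  set (d := fun v => proj1_sig (constructive_indefinite_description _ (D_exists G tt x0 v))).
  assert (dD : forall v, Drel G x0 v (d v))
    by (intro v; exact (proj2_sig (constructive_indefinite_description _ (D_exists G tt x0 v)))).
  assert (dA : forall u v (p : path G u v), d v = (d u + Z.of_nat (plen G _ _ p))%Z).
  { intros u v p. symmetry. apply (D_unique G th x0 v); [apply D_add; auto|apply dD]. }
  assert (d0 : d x0 = 0%Z).
  { apply (D_unique G th x0 x0); [apply dD|left; exists (pnil G x0); reflexivity]. }
  assert (dinj : forall u v, d u = d v -> u = v).
  { intros u v H. destruct (tt u v) as [[p]|[p]]; pose proof (dA _ _ p);
    [|symmetry]; apply (len0 G _ _ p); lia. }
  assert (dle : forall u v, inhabited (path G u v) <-> (d u <= d v)%Z).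
  { intros u v; split.
    - intros [p]; rewrite (dA _ _ p); lia.
    - intro H. destruct (tt u v) as [Hp|[p]]; auto.
      pose proof (dA _ _ p). assert (d u = d v) by lia.
      rewrite (dinj _ _ H1). constructor; apply pnil. }
  assert (conv : forall u v k, (d u <= k <= d v)%Z -> exists w, d w = k).
  { intros u v k Hk. assert (Huv : (d u <= d v)%Z) by lia.
    apply dle in Huv. destruct Huv as [p]. exact (conv_path G d dA u v p k Hk). }
  set (Sset := fun k => exists w, d w = k).
  assert (Sd : forall v, Sset (d v)) by (intro v; exists v; auto).
  assert (S0 : Sset 0%Z) by (exists x0; auto).
  set (P := fun n => Sset (Z.of_nat n)).
  set (Q := fun n => Sset (- Z.of_nat n)%Z).
  assert (Pd : forall n m, m <= n -> P n -> P m).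
  { intros n m Hm [w Hw]. apply (conv x0 w); lia. }
  assert (Qd : forall n m, m <= n -> Q n -> Q m).
  { intros n m Hm [w Hw]. apply (conv w x0); lia. }
  assert (SPQ : forall k, Sset k <-> ((0 <= k)%Z -> P (Z.to_nat k)) /\ ((k < 0)%Z -> Q (Z.to_nat (- k)))).
  { intro k; unfold P, Q; split.
    - intro H; split; intro Hk; [rewrite Z2Nat.id by lia|rewrite Z2Nat.id by lia; rewrite Z.opp_involutive]; auto.
    - intros [H1 H2]. destruct (Z_lt_le_dec k 0) as [Hk|Hk].
      + specialize (H2 Hk). rewrite Z2Nat.id, Z.opp_involutive in H2 by lia; auto.
      + specialize (H1 Hk). rewrite Z2Nat.id in H1 by lia; auto. }
  assert (Sim : forall k, Sset k -> exists w, d w = k) by (intros k H; exact H).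
  destruct (classic (forall n, P n)) as [HP|HP];
  destruct (classic (forall n, Q n)) as [HQ|HQ].
  -
    right; right; right.
    assert (SC : forall k, Sset k) by (intro k; apply SPQ; split; intros; auto).
    apply (transfer G Z Z.le d Sset (fun k => k) (fun k => k)); auto; tauto.
  - apply not_all_ex_not in HQ. destruct HQ as [n Hn].
    destruct (bound Q Qd n Hn) as [c Hc].
    assert (c >= 1) by (destruct c; [assert (Q0 : Q 0) by exact S0; apply Hc in Q0|]; lia).
    assert (SC : forall k, Sset k <-> (1 - Z.of_nat c <= k)%Z).
    { intro k; rewrite SPQ, Hc; split.
      - intros [H1 H2]. destruct (Z_lt_le_dec k 0); [specialize (H2 l)|]; lia.
      - intro; split; intros; [apply HP|lia]. }
    right; left.
    apply (transfer G nat le d Sset (fun k => Z.to_nat (k - (1 - Z.of_nat c)))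
             (fun t => (Z.of_nat t + (1 - Z.of_nat c))%Z)); auto.
    + intro t; apply SC; lia.
    + intro t; lia.
    + intros k Hk; apply SC in Hk; lia.
    + intros a b Ha Hb; apply SC in Ha; apply SC in Hb; lia.
  - apply not_all_ex_not in HP. destruct HP as [n Hn].
    destruct (bound P Pd n Hn) as [b Hb].
    assert (b >= 1) by (destruct b; [assert (P0 : P 0) by exact S0; apply Hb in P0|]; lia).
    assert (SC : forall k, Sset k <-> (k <= Z.of_nat b - 1)%Z).
    { intro k; rewrite SPQ, Hb; split.
      - intros [H1 H2]. destruct (Z_lt_le_dec k 0); [|specialize (H1 l)]; lia.
      - intro; split; intros; [lia|apply HQ]. }
    right; right; left.
    apply (transfer G nat (fun a b => b <= a) d Sset (fun k => Z.to_nat (Z.of_nat b - 1 - k))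
             (fun t => (Z.of_nat b - 1 - Z.of_nat t)%Z)); auto.
    + intro t; apply SC; lia.
    + intro t; lia.
    + intros k Hk; apply SC in Hk; lia.
    + intros a0 b0 Ha Hb0; apply SC in Ha; apply SC in Hb0; lia.
  - apply not_all_ex_not in HP. destruct HP as [n Hn].
    destruct (bound P Pd n Hn) as [b Hb].
    assert (b >= 1) by (destruct b; [assert (P0 : P 0) by exact S0; apply Hb in P0|]; lia).
    apply not_all_ex_not in HQ. destruct HQ as [m Hm].
    destruct (bound Q Qd m Hm) as [c Hc].
    assert (c >= 1) by (destruct c; [assert (Q0 : Q 0) by exact S0; apply Hc in Q0|]; lia).
    assert (SC : forall k, Sset k <-> (1 - Z.of_nat c <= k <= Z.of_nat b - 1)%Z).
    { intro k; rewrite SPQ, Hb, Hc; split.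
      - intros [H1 H2]. destruct (Z_lt_le_dec k 0); [specialize (H2 l)|specialize (H1 l)]; lia.
      - intro; split; intros; lia. }
    left. exists (S (b + c - 2)).
    set (N := b + c - 2).
    assert (Hlt : forall m, Nat.min m N < S N) by (intro; lia).
    apply (transfer G (ordinal (S N)) (ordinal_le (S N)) d Sset
             (fun k => exist _ (Nat.min (Z.to_nat (k - (1 - Z.of_nat c))) N) (Hlt _))
             (fun t => (Z.of_nat (proj1_sig t) + (1 - Z.of_nat c))%Z)); auto.
    + intros [t Ht]; apply SC; cbn [proj1_sig]; unfold N in Ht; lia.
    + intros [t Ht]; apply ord_eq; cbn [proj1_sig]; unfold N in *; lia.
    + intros k Hk; apply SC in Hk; cbn [proj1_sig]; unfold N; lia.
    + intros a0 b0 Ha Hb0; apply SC in Ha; apply SC in Hb0; unfold ordinal_le; cbn [proj1_sig]; unfold N; lia.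
Qed.

Theorem mainTheorem6 (G : graph) :
  free_cat_is_total_order G ->
  (exists n : nat, free_cat_iso_poset G (ordinal n) (ordinal_le n)) \/
  free_cat_iso_poset G nat le \/
  free_cat_iso_poset G nat (fun a b => b <= a) \/
  free_cat_iso_poset G Z Z.le.
Proof.
  intros [[th _] tt].
  destruct (classic (exists x : vert G, True)) as [Hx|Hx].
  - destruct (constructive_indefinite_description _ Hx) as [x0 _].
    exact (core G th tt x0).
  - left. exists 0.
    exists (fun v => False_rect _ (Hx (ex_intro _ v I))).
    exists (fun t => False_rect _ (Nat.nlt_0_r _ (proj2_sig t))).
    split; [|split].
    + intro x; exfalso; apply Hx; exists x; auto.
    + intros [t Ht]; exfalso; lia.
    + intros x; exfalso; apply Hx; exists x; auto.
Qed.
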